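(* Let $R$ be a finite commutative ring and let $F_R$ be a unitary operator on the space with orthonormal basis $\{\ket{r}:r\in R\}$ satisfying the control/target inversion property: for all $s\in R$, $(F_R^{\dagger}\otimes F_R)A_s(F_R\otimes F_R^{\dagger})=B_s$, where $A_s\ket{x}\ket{y}=\ket{x}\ket{y+sx}$ and $B_s\ket{x}\ket{y}=\ket{x+sy}\ket{y}$. Let $m\ge1$ and let $F_{R,m}$ be the quantum Fourier transform over the ring $M_m(R)$ of $m\times m$ matrices over $R$ defined from $F_R$. Then for every $S\in M_m(R)$, \[ (F_{R,m}^{\dagger}\otimes F_{R,m})\,L_S\,(F_{R,m}\otimes F_{R,m}^{\dagger}) = R'_S, \] where $L_S\ket{X}\ket{Y}=\ket{X}\ket{Y+SX}$ and $R'_S\ket{X}\ket{Y}=\ket{X+YS}\ket{Y}$ for all $X,Y\in M_m(R)$.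
   Context: A matrix $X=(x_{ij})\in M_m(R)$ is encoded in an $m\times m$ array of $R$-valued registers as the product state $\ket{X}=\bigotimes_{i=1}^m\bigotimes_{j=1}^m\ket{x_{ij}}$ (ordered $x_{11},x_{12},\dots,x_{1m},x_{21},\dots,x_{mm}$). The quantum Fourier transform over $M_m(R)$ is the linear operator $F_{R,m}:\ket{X}\mapsto\bigotimes_{i=1}^m\bigotimes_{j=1}^m F_R\ket{x_{ji}}$, i.e. apply $F_R$ to every register and transpose the array of registers. *)

(* Defs.v *)
From HB Require Import structures.
From mathcomp Require Import all_boot all_order all_algebra.
Set Implicit Arguments. Unset Strict Implicit. Unset Printing Implicit Defensive.
Import Order.TTheory GRing.Theory Num.Theory.
Local Open Scope ring_scope.

(* Operators on the finite-dimensional Hilbert space with orthonormal basis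
   {|i> : i in I} are represented by their matrix entries:
   op C I i j = <i| A |j>. *)
Definition op (C : numClosedFieldType) (I : finType) := I -> I -> C.

Definition op_id (C : numClosedFieldType) (I : finType) : op C I :=
  fun i j => (i == j)%:R.

Definition op_comp (C : numClosedFieldType) (I : finType) (A B : op C I) : op C I :=
  fun i k => \sum_(j : I) A i j * B j k.

Definition op_adj (C : numClosedFieldType) (I : finType) (A : op C I) : op C I :=
  fun i j => (A j i)^*.

Definition op_tensor (C : numClosedFieldType) (I J : finType) (A : op C I) (B : op C J)
  : op C (I * J)%type :=
  fun ij kl => A ij.1 kl.1 * B ij.2 kl.2.

Definition unitary (C : numClosedFieldType) (I : finType) (U : op C I) : Prop :=
  op_comp (op_adj U) U = @op_id C I /\ op_comp U (op_adj U) = @op_id C I.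

Definition basis_map (C : numClosedFieldType) (I : finType) (f : I -> I) : op C I :=
  fun i j => (i == f j)%:R.

Definition A_op (C : numClosedFieldType) (R : finComPzRingType) (s : R) : op C (R * R)%type :=
  basis_map C (fun xy : R * R => (xy.1, xy.2 + s * xy.1)).
Definition B_op (C : numClosedFieldType) (R : finComPzRingType) (s : R) : op C (R * R)%type :=
  basis_map C (fun xy : R * R => (xy.1 + s * xy.2, xy.2)).

(* Quantum Fourier transform over M_m(R): apply F_R to every register and
   transpose the array of registers:
   |X> |-> (x) _{i,j} F_R |x_{ji}>, so <Z| F_{R,m} |X> = prod_{i,j} <z_ij|F_R|x_ji>. *)
Definition qft_mat (C : numClosedFieldType) (R : finComPzRingType) (m : nat)
  (F : op C R) : op C 'M[R]_m :=
  fun Z X => \prod_(i < m) \prod_(j < m) F (Z i j) (X j i).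

Definition L_op (C : numClosedFieldType) (R : finComPzRingType) (m : nat) (S : 'M[R]_m)
  : op C ('M[R]_m * 'M[R]_m)%type :=
  basis_map C (fun XY : 'M[R]_m * 'M[R]_m => (XY.1, XY.2 + S *m XY.1)).
Definition R'_op (C : numClosedFieldType) (R : finComPzRingType) (m : nat) (S : 'M[R]_m)
  : op C ('M[R]_m * 'M[R]_m)%type :=
  basis_map C (fun XY : 'M[R]_m * 'M[R]_m => (XY.1 + XY.2 *m S, XY.2)).

(* Main.v *)
Require Import Defs.
From HB Require Import structures.
From mathcomp Require Import all_boot all_order all_algebra.
From Stdlib Require Import FunctionalExtensionality.
Import Order.TTheory GRing.Theory Num.Theory.
Local Open Scope ring_scope.

Section OpAlg.
Variables (C : numClosedFieldType).

Lemma op_compA (I : finType) (A B D : op C I) :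
  op_comp (op_comp A B) D = op_comp A (op_comp B D).
Proof.
apply: functional_extensionality => i; apply: functional_extensionality => k.
rewrite /op_comp.
under eq_bigr do rewrite big_distrl /=.
rewrite exchange_big /=; apply: eq_bigr => l _.
rewrite big_distrr /=; apply: eq_bigr => j _; by rewrite mulrA.
Qed.

Lemma op_comp1l (I : finType) (A : op C I) : op_comp (@op_id C I) A = A.
Proof.
apply: functional_extensionality => i; apply: functional_extensionality => k.
rewrite /op_comp /op_id (bigD1 i) //= eqxx mul1r big1 ?addr0 // => j /negPf.
by rewrite eq_sym => ->; rewrite mul0r.
Qed.

Lemma op_comp1r (I : finType) (A : op C I) : op_comp A (@op_id C I) = A.
Proof.
apply: functional_extensionality => i; apply: functional_extensionality => k.
rewrite /op_comp /op_id (bigD1 k) //= eqxx mulr1 big1 ?addr0 // => j /negPf.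
by move=> ->; rewrite mulr0.
Qed.

Lemma op_tensor_comp (I J : finType) (A B : op C I) (D E : op C J) :
  op_comp (op_tensor A D) (op_tensor B E) = op_tensor (op_comp A B) (op_comp D E).
Proof.
apply: functional_extensionality => i; apply: functional_extensionality => k.
rewrite /op_comp /op_tensor -(pair_bigA _ (fun u v => A i.1 u * D i.2 v * (B u k.1 * E v k.2))) /=.
rewrite big_distrl /=; apply: eq_bigr => u _; rewrite big_distrr /=.
apply: eq_bigr => v _; by rewrite mulrACA.
Qed.

Lemma op_tensor_id (I J : finType) :
  op_tensor (@op_id C I) (@op_id C J) = @op_id C (I * J)%type.
Proof.
apply: functional_extensionality => i; apply: functional_extensionality => k.
rewrite /op_tensor /op_id -natrM mulnb; case: i k => [i1 i2] [k1 k2].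
by rewrite xpair_eqE.
Qed.

Lemma basis_comp_l (I : finType) (f g : I -> I) (M : op C I) :
  cancel f g -> cancel g f ->
  forall i k, op_comp (basis_map C f) M i k = M (g i) k.
Proof.
move=> fK gK i k; rewrite /op_comp /basis_map (bigD1 (g i)) //= gK eqxx mul1r.
rewrite big1 ?addr0 // => j Hj; case: eqP => [E|]; last by rewrite mul0r.
by move: Hj; rewrite E fK eqxx.
Qed.

Lemma basis_comp_r (I : finType) (f : I -> I) (M : op C I) :
  forall i k, op_comp M (basis_map C f) i k = M i (f k).
Proof.
move=> i k; rewrite /op_comp /basis_map (bigD1 (f k)) //= eqxx mulr1.
by rewrite big1 ?addr0 // => j /negPf ->; rewrite mulr0.
Qed.

End OpAlg.
Lemma multi_shift (C : numClosedFieldType) (R : comPzRingType) (P Q T : finType)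
  (f : P -> R -> C) (g : Q -> R -> C) (x : P -> R) (b : Q -> R)
  (H : forall p q c a y, f p a * g q (y - c * x p) = f p (a + c * b q) * g q y)
  (pp : T -> P) (qq : T -> Q) (c : T -> R) (r : seq T) :
  forall (a : P -> R) (y : Q -> R),
  (\prod_p f p (a p)) * \prod_q g q (y q - \sum_(t <- r | qq t == q) c t * x (pp t))
  = (\prod_p f p (a p + \sum_(t <- r | pp t == p) c t * b (qq t))) * \prod_q g q (y q).
Proof.
elim: r => [|t r IH] a y.
  congr (_ * _); apply: eq_bigr => i _; by rewrite big_nil ?subr0 ?addr0.
pose y' q := y q - (if qq t == q then c t * x (pp t) else 0).
transitivity ((\prod_p f p (a p)) * \prod_q g q (y' q - \sum_(t <- r | qq t == q) c t * x (pp t))).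
  congr (_ * _); apply: eq_bigr => q _; rewrite big_cons /y'.
  by case: ifP => _; rewrite ?subr0 // opprD addrA.
rewrite IH.
rewrite (bigD1 (qq t)) //= [in RHS](bigD1 (qq t)) //=.
rewrite (bigD1 (pp t)) //= [in RHS](bigD1 (pp t)) //=.
rewrite /y' eqxx.
have E1 : \prod_(q | q != qq t) g q (y' q) = \prod_(q | q != qq t) g q (y q).
  by apply: eq_bigr => q; rewrite eq_sym => /negPf; rewrite /y' => ->; rewrite subr0.
have E2 : \prod_(p | p != pp t) f p (a p + \sum_(t0 <- r | pp t0 == p) c t0 * b (qq t0))
   = \prod_(p | p != pp t) f p (a p + \sum_(t0 <- (t :: r) | pp t0 == p) c t0 * b (qq t0)).
  by apply: eq_bigr => p; rewrite eq_sym => /negPf Hp; rewrite big_cons Hp.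
rewrite /y' in E1; rewrite E1 E2 big_cons eqxx.
rewrite mulrACA H mulrACA.
by rewrite [c t * _ + _]addrC addrA.

Qed.
Lemma sum_mx_prod (C : numClosedFieldType) (R : finComPzRingType) (m : nat)
  (G : 'I_m -> 'I_m -> R -> C) :
  \sum_(Z : 'M[R]_m) \prod_i \prod_j G i j (Z i j) = \prod_i \prod_j \sum_z G i j z.
Proof.
rewrite pair_bigA /= bigA_distr_bigA /=.
rewrite (reindex (@Matrix R m m)) /=; last first.
  by apply: onW_bij; exists (@mx_val R m m) => [f|[f]].
apply: eq_bigr => f _; rewrite pair_bigA /=; apply: eq_bigr => -[i j] _ //.
Qed.

Lemma prod_ind (C : numClosedFieldType) (R : finComPzRingType) (m : nat)
  (X X' : 'M[R]_m) :
  \prod_i \prod_j ((X i j == X' i j)%:R : C) = (X == X')%:R.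
Proof.
case: eqP => [->|NE].
  by rewrite big1 // => i _; rewrite big1 // => j _; rewrite eqxx.
case: (boolP [forall i, forall j, X i j == X' i j]) => H.
  by exfalso; apply: NE; apply/matrixP => i j; move/forallP: H => /(_ i) /forallP /(_ j) /eqP.
move: H; rewrite negb_forall => /existsP [i]; rewrite negb_forall => /existsP [j] Hij.
rewrite (bigD1 i) //= (bigD1 j) //= (negPf Hij) !mul0r //.
Qed.

Section Main.
Variables (C : numClosedFieldType) (R : finComPzRingType) (F : op C R).
Hypothesis hU : unitary F.

Lemma star (s : R)
  (hinv : op_comp (op_comp (op_tensor (op_adj F) F) (A_op C s)) (op_tensor F (op_adj F))
     = B_op C s) x a b y :
  F x a * (F b (y - s * x))^* = F x (a + s * b) * (F b y)^*.
Proof.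
have I : @op_id C (R * R)%type = op_tensor (op_comp F (op_adj F)) (op_comp (op_adj F) F).
  by rewrite hU.1 hU.2 op_tensor_id.
have E : op_comp (A_op C s) (op_tensor F (op_adj F))
       = op_comp (op_tensor F (op_adj F)) (B_op C s).
  rewrite -hinv -!op_compA op_tensor_comp -I.
  by rewrite op_comp1l.
have := congr1 (fun M => M (x, y) (a, b)) E => /=.
rewrite basis_comp_r (@basis_comp_l _ _ _ (fun xy : R * R => (xy.1, xy.2 - s * xy.1))).
- by rewrite /op_tensor /op_adj /=.
- by case=> u v /=; rewrite addrK.
- by case=> u v /=; rewrite subrK.
Qed.


Lemma hF1 a a' : \sum_z (F z a)^* * F z a' = (a == a')%:R.
Proof. by have := congr1 (fun M => M a a') hU.1. Qed.

Lemma hF2 a a' : \sum_z F a z * (F a' z)^* = (a == a')%:R.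
Proof. by have := congr1 (fun M => M a a') hU.2. Qed.

Lemma qft_unitary (m : nat) : unitary (@qft_mat C R m F).
Proof.
split; apply: functional_extensionality => X; apply: functional_extensionality => X';
  rewrite /op_comp /op_adj /qft_mat /op_id.
- transitivity (\sum_(Z : 'M[R]_m) \prod_i \prod_j ((F (Z i j) (X j i))^* * F (Z i j) (X' j i))).
    apply: eq_bigr => Z _; rewrite rmorph_prod -big_split; apply: eq_bigr => i _.
    by rewrite rmorph_prod -big_split.
  rewrite (@sum_mx_prod _ _ _ (fun i j z => (F z (X j i))^* * F z (X' j i))).
  under eq_bigr do under eq_bigr do rewrite hF1.
  by rewrite exchange_big prod_ind.
- transitivity (\sum_(Z : 'M[R]_m) \prod_j \prod_i (F (X i j) (Z j i) * (F (X' i j) (Z j i))^*)).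
    apply: eq_bigr => Z _; rewrite rmorph_prod -big_split exchange_big; apply: eq_bigr => i _.
    by rewrite rmorph_prod -big_split.
  rewrite (@sum_mx_prod _ _ _ (fun j i z => F (X i j) z * (F (X' i j) z)^*)).
  under eq_bigr do under eq_bigr do rewrite hF2.
  by rewrite exchange_big prod_ind.
Qed.


Lemma key (hinv : forall s : R,
     op_comp (op_comp (op_tensor (op_adj F) F) (A_op C s)) (op_tensor F (op_adj F))
     = B_op C s) (m : nat) (S : 'M[R]_m) :
  op_comp (L_op C S) (op_tensor (@qft_mat C R m F) (op_adj (@qft_mat C R m F)))
  = op_comp (op_tensor (@qft_mat C R m F) (op_adj (@qft_mat C R m F))) (R'_op C S).
Proof.
apply: functional_extensionality => -[X Y]; apply: functional_extensionality => -[A B].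
rewrite basis_comp_r (@basis_comp_l _ _ _ (fun XY : 'M[R]_m * 'M[R]_m => (XY.1, XY.2 - S *m XY.1))); first last.
- by case=> u v /=; rewrite subrK.
- by case=> u v /=; rewrite addrK.
rewrite /op_tensor /op_adj /qft_mat !rmorph_prod.
under eq_bigr do rewrite rmorph_prod.
under [in RHS]eq_bigr do rewrite rmorph_prod.
rewrite !pair_bigA /=.
have shY i j : (Y - S *m X) j i
   = Y j i - \sum_(t : 'I_m * 'I_m * 'I_m | t.1 == (i,j)) S t.1.2 t.2 * X t.2 t.1.1.
  rewrite !mxE; congr (_ - _).
  transitivity (\sum_(q : 'I_m * 'I_m | q == (i,j)) \sum_k S q.2 k * X k q.1).
    by rewrite big_pred1_eq.
  rewrite pair_big_dep /=; apply: eq_bigl => t; by rewrite andbT.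
have shA i k : (A + B *m S) i k
   = A i k + \sum_(t : 'I_m * 'I_m * 'I_m | (t.2, t.1.1) == (k,i)) S t.1.2 t.2 * B t.1.1 t.1.2.
  rewrite !mxE; congr (_ + _).
  transitivity (\sum_(q : 'I_m * 'I_m) \sum_(k' | (k', q.1) == (k,i)) S q.2 k' * B q.1 q.2); last first.
    by rewrite pair_big_dep /=.
  rewrite -(pair_bigA _ (fun i' j => \sum_(k' | (k', i') == (k,i)) S j k' * B i' j)) /=.
  symmetry; rewrite (bigD1 i) //= addrC big1 ?add0r; last first.
    move=> i' Hi'; apply: big1 => j _; apply: big1 => k'.
    by rewrite xpair_eqE (negPf Hi') andbF.
  apply: eq_bigr => j _.
  rewrite (eq_bigl (fun k' => k' == k)); first by rewrite big_pred1_eq mulrC.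
  by move=> k'; rewrite xpair_eqE eqxx andbT.
have MS := @multi_shift C R _ _ _ (fun p a => F (X p.1 p.2) a) (fun q y => (F (B q.1 q.2) y)^*)
  (fun p => X p.1 p.2) (fun q => B q.1 q.2)
  (fun p q c a y => @star c (hinv c) _ _ _ _)
  (fun t : 'I_m * 'I_m * 'I_m => (t.2, t.1.1)) (fun t => t.1) (fun t => S t.1.2 t.2)
  (index_enum _) (fun p => A p.2 p.1) (fun q => Y q.2 q.1).
transitivity ((\prod_(p : 'I_m * 'I_m) F (X p.1 p.2) (A p.2 p.1)) *
  \prod_(q : 'I_m * 'I_m) (F (B q.1 q.2) (Y q.2 q.1 -
     \sum_(t : 'I_m * 'I_m * 'I_m | t.1 == q) S t.1.2 t.2 * X t.2 t.1.1))^*).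
  by congr (_ * _); apply: eq_bigr => -[i j] _; rewrite shY.
rewrite MS; congr (_ * _); apply: eq_bigr => -[k i] _ /=; by rewrite shA.
Qed.

End Main.

Theorem mainTheorem5 (C : numClosedFieldType) (R : finComPzRingType) (F : op C R)
  (hU : unitary F)
  (hinv : forall s : R,
     op_comp (op_comp (op_tensor (op_adj F) F) (A_op C s)) (op_tensor F (op_adj F))
     = B_op C s)
  (m : nat) (hm : (1 <= m)%N) (S : 'M[R]_m) :
  op_comp (op_comp (op_tensor (op_adj (@qft_mat C R m F)) (@qft_mat C R m F)) (L_op C S))
          (op_tensor (@qft_mat C R m F) (op_adj (@qft_mat C R m F)))
  = R'_op C S.
Proof.
have [U1 U2] := @qft_unitary C R F hU m.
rewrite op_compA (@key C R F hU hinv) -op_compA op_tensor_comp U1 U2 op_tensor_id.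
by rewrite op_comp1l.
Qed.
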